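(* Fix a context $x$, a finite response set $\mathcal Y(x)$, a distribution $\pi_{\mathrm{old}}(\cdot\mid x)$ on $\mathcal Y(x)$, a function $A(x,\cdot):\mathcal Y(x)\to\mathbb R$, and $\beta>0$. For $\tau>0$ define the Lambert mass function \[ M_A(\tau)=\mathbb E_{y\sim\pi_{\mathrm{old}}(\cdot\mid x)}\left[\frac{1}{\tau}W_0\!\left(\tau\exp\!\left(\frac{A(x,y)}{\beta}\right)\right)\right]. \] Suppose $\tau_s>0$ satisfies $M_A(\tau_s)=1$. If $\mathbb E_{y\sim\pi_{\mathrm{old}}(\cdot\mid x)}[A(x,y)]\ge\beta$, then $\tau_s\ge1$. Consequently: (i) for any rewards $r_1,\dots,r_G\in\mathbb R$ ($G\ge 1$) with $\bar r=\frac1G\sum_j r_j$, the advantages $\widehat A_i=r_i-\bar r+\beta$ satisfy $\frac1G\sum_{i=1}^G W_0(\exp(\widehat A_i/\beta))\ge1$, so that any $\widehat\tau>0$ with $\frac1G\sum_{i=1}^G\frac{1}{\widehat\tau}W_0(\widehat\tau\exp(\widehat A_i/\beta))=1$ satisfies $\widehat\tau\ge1$; and (ii) if $r:\mathcal Y(x)\to\mathbb R$ is a reward, $V_{\mathrm{old}}(x)=\mathbb E_{y\sim\pi_{\mathrm{old}}}[r(y)]$, and $A_G(x,y)=\frac{G-1}{G}(r(y)-V_{\mathrm{old}}(x))+\beta$ (which equals $\mathbb E[r_i-\bar r+\beta\mid y_i=y]$ when $y_1,\dots,y_G$ are i.i.d. from $\pi_{\mathrm{old}}(\cdot\mid x)$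 and $r_j=r(y_j)$), then any $\tau_s>0$ with $M_{A_G}(\tau_s)=1$ satisfies $\tau_s\ge1$.
   Context: $W_0$ denotes the principal branch of the Lambert $W$ function, i.e. the inverse of $w\mapsto we^w$ on $[-1,\infty)$, satisfying $W_0(z)e^{W_0(z)}=z$. $\tau_s$ is called the Lambert normalization multiplier; the Lambert target is $\pi^\star(y\mid x)=\frac{\pi_{\mathrm{old}}(y\mid x)}{\tau_s}W_0(\tau_s e^{A(x,y)/\beta})$. *)

(* Defs.v *)
From HB Require Import structures.
From mathcomp Require Import all_boot all_order all_algebra.
From mathcomp Require Import all_classical all_reals all_analysis.
Set Implicit Arguments. Unset Strict Implicit. Unset Printing Implicit Defensive.
Import Order.TTheory GRing.Theory Num.Theory.
Local Open Scope classical_set_scope.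
Local Open Scope ring_scope.

(* Since w |-> w e^w is injective on [-1, oo), this is well defined for
   z >= -1/e (the only arguments used here are positive). *)
Definition W0 {R : realType} (z : R) : R :=
  xget 0 [set w : R | -1 <= w /\ w * expR w = z].

Definition lambert_mass {R : realType} {Y : finType} (pi : Y -> R) (A : Y -> R)
  (beta tau : R) : R :=
  \sum_(y : Y) pi y * (tau^-1 * W0 (tau * expR (A y / beta))).

(* Main.v *)
Require Import Defs.
From HB Require Import structures.
From mathcomp Require Import all_boot all_order all_algebra.
From mathcomp Require Import all_classical all_reals all_analysis.
From mathcomp Require Import ring lra.
Import Order.TTheory GRing.Theory Num.Theory.
Import numFieldNormedType.Exports.
Local Open Scope ring_scope.

Lemma W0_spec {R : realType} (z : R) : 0 < z ->
  0 < W0 z /\ W0 z * expR (W0 z) = z.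
Proof.
move=> z0.
have ex : exists w : R, -1 <= w /\ w * expR w = z.
  have := @IVT R (fun w => w * expR w) 0 z z (ltW z0).
  case.
  - have hc : continuous (fun w : R => w * expR w).
      move=> y; exact: (@continuousM _ _ id expR y (@cvg_id _ _) (@continuous_expR R y)).
    by apply/continuous_subspaceT.
  - rewrite mul0r; apply/andP; split.
      by rewrite ge_min (ltW z0).
    rewrite le_max; apply/orP; right.
    by rewrite -{1}(mulr1 z) ler_wpM2l ?(ltW z0) // -expR0 ler_expR ltW.
  - move=> w; rewrite in_itv /= => /andP[w0 _] E; exists w; split => //.
    by apply: le_trans w0; rewrite lerN10.
have [H1 H2] := xgetPex 0 ex; rewrite /W0; split => //.
rewrite -/(W0 z) in H2 *.
rewrite lt_neqAle; apply/andP; split.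
  by apply/eqP => E; move: H2; rewrite -E mul0r => E2; move: z0; rewrite E2 ltxx.
rewrite leNgt; apply/negP => wn.
have : W0 z * expR (W0 z) < 0 by rewrite pmulr_llt0 ?expR_gt0.
by rewrite H2 ltNge (ltW z0).
Qed.
Lemma W0_tangent {R : realType} (a : R) : (1 + a) / 2 <= W0 (expR a).
Proof.
have [w0 E] := W0_spec _ (expR_gt0 a).
set w := W0 (expR a) in w0 E *.
rewrite leNgt; apply/negP => H.
have H1 : 2 * w - 1 < a by lra.
have := expR_ge1Dx (w - 1).
have : expR (2 * w - 1) < expR a by rewrite ltr_expR.
rewrite -E (_ : 2 * w - 1 = (w - 1) + w); last by ring.
rewrite expRD => H2 H3.
have ew := expR_gt0 w.
nra.
Qed.

Lemma W0_mono {R : realType} (t c : R) : 0 < t -> t < 1 -> 0 < c ->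
  W0 c < t^-1 * W0 (t * c).
Proof.
move=> t0 t1 c0.
have [u0 Eu] := W0_spec _ (mulr_gt0 t0 c0).
have [v0 Ev] := W0_spec _ c0.
set u := W0 (t * c) in u0 Eu *; set v := W0 c in v0 Ev *.
have ev := expR_gt0 v; have eu := expR_gt0 u.
have uv : u < v.
  rewrite ltNge; apply/negP => vu.
  have : expR v <= expR u by rewrite ler_expR.
  nra.
have euv : expR u < expR v by rewrite ltr_expR.
have Eu' : t^-1 * u * expR u = c by rewrite -mulrA Eu mulrA mulVf ?mul1r // gt_eqF.
have ti : 0 < t^-1 by rewrite invr_gt0.
set s := t^-1 * u in Eu' *.
have s0 : 0 < s by rewrite mulr_gt0.
rewrite ltNge; apply/negP => sv.
nra.
Qed.

Lemma mean_tangent {R : realType} {Y : finType} (pi A : Y -> R) (beta : R) :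
  (forall y, 0 <= pi y) -> \sum_(y : Y) pi y = 1 -> 0 < beta ->
  beta <= \sum_(y : Y) pi y * A y ->
  1 <= \sum_(y : Y) pi y * W0 (expR (A y / beta)).
Proof.
move=> p0 p1 b0 hb.
apply: (@le_trans _ _ (\sum_(y : Y) (2^-1 * pi y + (2^-1 / beta) * (pi y * A y)))).
  rewrite big_split /= -!mulr_sumr p1.
  have : 1 <= beta^-1 * \sum_y pi y * A y.
    by rewrite -(mulVf (lt0r_neq0 b0)) ler_wpM2l // invr_ge0 ltW.
  rewrite mulrAC. set S := \sum_y pi y * A y. move=> h. lra.
apply: ler_sum => y _.
have := W0_tangent (A y / beta).
have := p0 y.
move=> h1 h2.
have -> : 2^-1 * pi y + 2^-1 / beta * (pi y * A y) = pi y * ((1 + A y / beta) / 2) by field; exact: lt0r_neq0.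
by rewrite ler_wpM2l.
Qed.

Lemma main_claim (R : realType) (Y : finType) (pi A : Y -> R) (beta taus : R) :
     (forall y, 0 <= pi y) -> \sum_(y : Y) pi y = 1 ->
     0 < beta -> 0 < taus -> lambert_mass pi A beta taus = 1 ->
     beta <= \sum_(y : Y) pi y * A y -> 1 <= taus.
Proof.
move=> p0 p1 b0 t0 hm hb.
rewrite leNgt; apply/negP => t1.
have h1 := mean_tangent _ _ _ p0 p1 b0 hb.
have [y0 py0] : exists y, 0 < pi y.
  apply: contrapT => hn.
  have : \sum_(y : Y) pi y = 0.
    apply: big1 => y _; apply/eqP; rewrite eq_le p0 andbT leNgt.
    by apply/negP => h; apply: hn; exists y.
  by rewrite p1 => /eqP; rewrite oner_eq0.
set f := fun y => taus^-1 * W0 (taus * expR (A y / beta)).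
set g := fun y => W0 (expR (A y / beta)).
have fg y : g y < f y by apply: W0_mono => //; exact: expR_gt0.
have : 0 < \sum_(y : Y) pi y * (f y - g y).
  rewrite (bigD1 y0) //=.
  apply: (@lt_le_trans _ _ (pi y0 * (f y0 - g y0))).
    by rewrite mulr_gt0 // subr_gt0.
  rewrite lerDl; apply: sumr_ge0 => y _.
  by rewrite mulr_ge0 // subr_ge0 ltW.
have -> : \sum_(y : Y) pi y * (f y - g y) =
  \sum_(y : Y) pi y * f y - \sum_(y : Y) pi y * g y.
  rewrite -sumrB; apply: eq_bigr => y _; by rewrite mulrBr.
move: hm; rewrite /lambert_mass -/f => ->.
rewrite /g subr_gt0 => h2.
by move: (lt_le_trans h2 h1); rewrite ltxx.
Qed.

Theorem proposition2 (R : realType) :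
  (* main claim *)
  (forall (Y : finType) (pi A : Y -> R) (beta taus : R),
     (forall y, 0 <= pi y) -> \sum_(y : Y) pi y = 1 ->
     0 < beta -> 0 < taus -> lambert_mass pi A beta taus = 1 ->
     beta <= \sum_(y : Y) pi y * A y -> 1 <= taus)
  /\
  (* consequence (i): empirical group advantages *)
  (forall (G : nat) (r : 'I_G -> R) (beta : R),
     (0 < G)%N -> 0 < beta ->
     let rbar := G%:R^-1 * \sum_(j < G) r j in
     let Ahat := fun i : 'I_G => r i - rbar + beta in
     1 <= G%:R^-1 * \sum_(i < G) W0 (expR (Ahat i / beta)) /\
     (forall tauh : R, 0 < tauh ->
        G%:R^-1 * \sum_(i < G) (tauh^-1 * W0 (tauh * expR (Ahat i / beta))) = 1 ->
        1 <= tauh))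
  /\
  (* consequence (ii): population advantage A_G *)
  (forall (Y : finType) (pi r : Y -> R) (beta : R) (G : nat) (taus : R),
     (forall y, 0 <= pi y) -> \sum_(y : Y) pi y = 1 ->
     0 < beta -> (0 < G)%N ->
     let Vold := \sum_(y : Y) pi y * r y in
     let AG := fun y : Y => (G%:R - 1) / G%:R * (r y - Vold) + beta in
     0 < taus -> lambert_mass pi AG beta taus = 1 -> 1 <= taus).
Proof.
split; first exact: main_claim.
split.
  move=> G r beta G0 b0 rbar Ahat.
  have Gn0 : (G%:R : R) != 0 by rewrite pnatr_eq0 -lt0n.
  set pi := fun _ : 'I_G => (G%:R : R)^-1.
  have p0 : forall y, 0 <= pi y by move=> y; rewrite /pi invr_ge0 ler0n.
  have p1 : \sum_(y < G) pi y = 1.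
    by rewrite sumr_const card_ord /pi -[_ *+ G]mulr_natr mulVf.
  have hA : beta <= \sum_(y < G) pi y * Ahat y.
    rewrite -mulr_sumr /Ahat big_split /= sumrB !sumr_const card_ord /rbar.
    set S := \sum_(j < G) r j.
    rewrite -(mulr_natr (G%:R^-1 * S)) -(mulr_natr beta).
    rewrite le_eqVlt; apply/orP; left; apply/eqP; field; exact: Gn0.
  split.
    rewrite mulr_sumr; exact: (mean_tangent _ _ _ p0 p1 b0 hA).
  move=> tauh t0 h; apply: (main_claim _ _ _ _ _ _ p0 p1 b0 t0 _ hA).
  by rewrite /lambert_mass -h mulr_sumr.
move=> Y pi r beta G taus p0 p1 b0 G0 Vold AG t0 hm.
apply: (main_claim _ _ _ _ _ _ p0 p1 b0 t0 hm).
rewrite le_eqVlt; apply/orP; left; apply/eqP.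
set k := (G%:R - 1) / (G%:R : R).
have -> : \sum_(y : Y) pi y * AG y =
   \sum_(y : Y) (k * (pi y * r y) - (k * Vold) * pi y + beta * pi y).
  apply: eq_bigr => y _; rewrite /AG -/k; ring.
rewrite big_split /= sumrB -!mulr_sumr p1 -/Vold; ring.
Qed.
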